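(* For every integer $n\ge 1$ and every integer $k$ with $0\le k\le 2^{n}-2$, $$B_{k+1}(t)B_{2^{n}-k}(t)-B_{k}(t)B_{2^{n}-k-1}(t)=t^{n}.$$
   Context: The Stern polynomials $B_n(t)\in\mathbb{Z}[t]$, $n\ge 0$, are defined by $B_0(t)=0$, $B_1(t)=1$, $B_{2n}(t)=tB_n(t)$ and $B_{2n+1}(t)=B_n(t)+B_{n+1}(t)$ for $n\ge 1$. *)

(* Defs.v *)
From HB Require Import structures.
From mathcomp Require Import all_boot all_order all_algebra.
Set Implicit Arguments. Unset Strict Implicit. Unset Printing Implicit Defensive.
Import GRing.Theory.
Local Open Scope ring_scope.

(* Stern polynomials B_n(t) in Z[t]:
   B_0 = 0, B_1 = 1, B_{2n} = t B_n, B_{2n+1} = B_n + B_{n+1}.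
   Defined by recursion with fuel; fuel n suffices (B_n_rec below). *)
Fixpoint stern_aux (fuel : nat) (n : nat) : {poly int} :=
  match fuel with
  | 0%N => 0
  | f.+1 =>
    match n with
    | 0%N => 0
    | 1%N => 1
    | _ => if odd n then stern_aux f n./2 + stern_aux f n./2.+1
           else 'X * stern_aux f n./2
    end
  end.

Definition stern (n : nat) : {poly int} := stern_aux n n.

(* Main.v *)
Require Import Defs.
From HB Require Import structures.
From mathcomp Require Import all_boot all_order all_algebra.
Import GRing.Theory.
Local Open Scope ring_scope.

Lemma fuel f : forall g n, (n <= f)%N -> (n <= g)%N -> stern_aux f n = stern_aux g n.
Proof.
elim: f => [|f IH] [|g] [|[|m]] //=.
all: try (by []).
rewrite negbK !ltnS => Hf Hg.
have Hh : (m./2.+1 <= m.+1)%N.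
  rewrite ltnS leq_half_double.
  by apply: (leq_trans (leq_addr m m)); rewrite addnn.
case: ifP => Ho.
- have Hh2 : (m./2.+2 <= m.+1)%N.
    rewrite !ltnS ltn_half_double -addnn.
    case: m Ho {Hf Hg Hh} => [|m] //= _.
    by rewrite addnS ltnS; apply: leq_addr.
  rewrite (IH g m./2.+1) ?(leq_trans Hh) //.
  by rewrite (IH g m./2.+2) ?(leq_trans Hh2).
- by rewrite (IH g m./2.+1) ?(leq_trans Hh).
Qed.

Lemma stern_fuel f n : (n <= f)%N -> stern_aux f n = stern n.
Proof. by move=> H; apply: fuel. Qed.

Lemma aux_S f m : stern_aux f.+1 m.+2 =
  if odd m then stern_aux f m./2.+1 + stern_aux f m./2.+2 else 'X * stern_aux f m./2.+1.
Proof. by rewrite -[odd m]negbK. Qed.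

Lemma stern_even i : stern i.*2 = 'X * stern i.
Proof.
case: i => [|i]; first by rewrite /stern /= mulr0.
rewrite doubleS /stern aux_S odd_double doubleK.
rewrite stern_fuel //.
by rewrite -addnn ltnS; apply: leq_addr.
Qed.

Lemma aux_S' f m : stern_aux f.+1 (m.*2.+3) = stern_aux f m.+1 + stern_aux f m.+2.
Proof.
rewrite (aux_S f m.*2.+1) /= odd_double /=.
by rewrite uphalf_double.
Qed.

Lemma stern_odd i : stern i.*2.+1 = stern i + stern i.+1.
Proof.
case: i => [|i]; first by rewrite /stern /= add0r.
rewrite doubleS /stern aux_S'.
rewrite !stern_fuel //; rewrite -addnn !ltnS.
  by apply: (leq_trans (leq_addr i i)).
by apply: (leq_trans (leq_addr i i)).
Qed.

Lemma L1 (R : comNzRingType) (a b c e x : R) :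
  (a+b)*(x*c) - x*a*(e+c) = x*(b*c - a*e).
Proof.
rewrite mulrDl mulrDr !mulrBr opprD addrACA [a*(x*c)]mulrCA [b*(x*c)]mulrCA -!mulrA.
by rewrite addrC -addrA addKr.
Qed.

Lemma L2 (R : comNzRingType) (a b c e x : R) :
  x*b*(e+c) - (a+b)*(x*e) = x*(b*c - a*e).
Proof.
rewrite mulrDl mulrDr !mulrBr opprD addrACA -!mulrA [a*(x*e)]mulrCA [b*(x*e)]mulrCA.
by rewrite addrC -addrA addKr.
Qed.

From Stdlib Require Import Lia.

Lemma main n : forall j d, (j + d.+1 = 2 ^ n)%N ->
  stern j.+1 * stern d.+1 - stern j * stern d = 'X ^+ n.
Proof.
elim: n => [|n IH] j d.
  rewrite expn0 => H.
  have [-> ->] : j = 0%N /\ d = 0%N by move: H; rewrite -!plusE; lia.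
  by rewrite /stern /= mulr0 subr0 mulr1.
rewrite expnS => H.
move: H; rewrite -(odd_double_half j) -(odd_double_half d).
set i := j./2; set e := d./2.
case: (odd j); case: (odd d); rewrite /= ?add0n ?add1n => H; have H' := H;
  rewrite -!muln2 -!plusE -!multE in H'.
- exfalso; lia.
- have Hi : (i + e.+1 = 2 ^ n)%N by rewrite -!plusE; lia.
  by rewrite -doubleS !stern_odd !stern_even (@L2 {poly int}) (IH i e Hi) exprS.
- have Hi : (i + e.+1 = 2 ^ n)%N by rewrite -!plusE; lia.
  by rewrite -doubleS !stern_odd !stern_even (@L1 {poly int}) (IH i e Hi) exprS.
- exfalso; lia.
Qed.

Theorem theorem2p5 (n k : nat) :
  (1 <= n)%N -> (k <= 2 ^ n - 2)%N ->
  stern k.+1 * stern (2 ^ n - k) - stern k * stern (2 ^ n - k - 1) = 'X ^+ n.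
Proof.
move=> Hn Hk.
have HN : (2 <= 2 ^ n)%N by rewrite -{1}(expn1 2) leq_exp2l.
set N := (2 ^ n)%N in HN Hk *.
have E : (N - k = (N - k - 1).+1)%N.
  move/leP: HN => HN; move/leP: Hk => Hk; rewrite -!minusE in Hk *; lia.
rewrite {1}E; apply: main.
move/leP: HN => HN; move/leP: Hk => Hk; rewrite -!minusE -plusE in Hk *; lia.
Qed.
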